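(* Let $r=\frac{2}{3\sqrt{3}}$. Then $$\mathcal{P}^3=\{c_1+c_4\mathbf{j_1}+c_6\mathbf{j_2} : c_1,c_4,c_6\in\mathbb{R},\ |c_1|+|c_4|+|c_6|\leq r\};$$ that is, under the identification $c_1+c_4\mathbf{j_1}+c_6\mathbf{j_2}\leftrightarrow(c_1,c_4,c_6)\in\mathbb{R}^3$, the Perplexbric is the regular octahedron centered at the origin with vertices $\pm r$ on the coordinate axes, whose edges have length $\frac{2\sqrt{2}}{3\sqrt{3}}$.
   Context: The tricomplex numbers $\mathbb{M}(3)$ form the commutative real algebra generated by commuting units $\mathbf{i_1},\mathbf{i_2},\mathbf{i_3}$ with $\mathbf{i_k}^2=-1$; set $\mathbf{j_1}=\mathbf{i_1}\mathbf{i_2}$, $\mathbf{j_2}=\mathbf{i_1}\mathbf{i_3}$, $\mathbf{j_3}=\mathbf{i_2}\mathbf{i_3}$, $\mathbf{i_4}=\mathbf{i_1}\mathbf{i_2}\mathbf{i_3}$, with real basis $1,\mathbf{i_1},\mathbf{i_2},\mathbf{i_3},\mathbf{i_4},\mathbf{j_1},\mathbf{j_2},\mathbf{j_3}$ and Euclidean norm on coordinates. For $c\in\mathbb{M}(3)$, $Q_{3,c}(\eta)=\eta^3+c$ and $Q_{3,c}^m$ is its $m$-fold iterate. The Perplexbric is $\mathcal{P}^3=\{c=c_1+c_4\mathbf{j_1}+c_6\mathbf{j_2} : c_1,c_4,c_6\in\mathbb{R},\ (Q_{3,c}^m(0))_{m\geq1}\text{ bounded}\}$. *)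

(* Defs.v *)
From Stdlib Require Import Reals Lra.
Open Scope R_scope.

(* Tricomplex numbers M(3): the real algebra with basis e_S, S a subset of
   {1,2,3}, encoded as a boolean triple (s1,s2,s3); e_S = prod_{k in S} i_k.
   So 1 = e_{}, i1 = e_{1}, i2 = e_{2}, i3 = e_{3}, j1 = i1 i2 = e_{12},
   j2 = i1 i3 = e_{13}, j3 = i2 i3 = e_{23}, i4 = i1 i2 i3 = e_{123}.
   Since the i_k commute and i_k^2 = -1, e_S e_T = (-1)^{|S /\ T|} e_{S xor T}. *)
Definition idx : Type := (bool * bool * bool)%type.

Definition M3 : Type := idx -> R.

Definition all_idx : list idx :=
  (false,false,false) :: (true,false,false) :: (false,true,false) ::
  (false,false,true) :: (true,true,false) :: (true,false,true) ::
  (false,true,true) :: (true,true,true) :: nil.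

Definition idx_xor (s t : idx) : idx :=
  match s, t with
  | (a1,a2,a3), (b1,b2,b3) => (xorb a1 b1, xorb a2 b2, xorb a3 b3)
  end.

Definition idx_sign (s t : idx) : R :=
  match s, t with
  | (a1,a2,a3), (b1,b2,b3) =>
      (if andb a1 b1 then -1 else 1) * (if andb a2 b2 then -1 else 1)
      * (if andb a3 b3 then -1 else 1)
  end.

Definition sum_idx (f : idx -> R) : R :=
  List.fold_right (fun s acc => f s + acc) 0 all_idx.

Definition M3_add (x y : M3) : M3 := fun k => x k + y k.

Definition M3_mul (x y : M3) : M3 :=
  fun k => sum_idx (fun s => idx_sign s (idx_xor s k) * x s * y (idx_xor s k)).

Definition M3_zero : M3 := fun _ => 0.

Definition M3_norm (x : M3) : R := sqrt (sum_idx (fun s => x s ^ 2)).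

Definition Q3 (c eta : M3) : M3 := M3_add (M3_mul eta (M3_mul eta eta)) c.

Fixpoint Q3_iter (c : M3) (m : nat) : M3 :=
  match m with
  | O => M3_zero
  | S m' => Q3 c (Q3_iter c m')
  end.

Definition bounded_orbit (c : M3) : Prop :=
  exists B : R, forall m : nat, (1 <= m)%nat -> M3_norm (Q3_iter c m) <= B.

(* the element c1 + c4 j1 + c6 j2 *)
Definition perplex_pt (c1 c4 c6 : R) : M3 :=
  fun k => match k with
           | (false,false,false) => c1
           | (true,true,false) => c4
           | (true,false,true) => c6
           | _ => 0
           end.

Definition in_Perplexbric (c1 c4 c6 : R) : Prop :=
  bounded_orbit (perplex_pt c1 c4 c6).

(* Main.v *)
Require Import Defs.
From Stdlib Require Import Reals Lra Lia FunctionalExtensionality.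
Open Scope R_scope.

Fixpoint xs (a : R) (n : nat) : R :=
  match n with O => 0 | S m => xs a m ^ 3 + a end.

Lemma xs_opp a n : xs (-a) n = - xs a n.
Proof. induction n; simpl; [ring| rewrite IHn; ring]. Qed.

Lemma abs_bt x b : Rabs x <= b -> -b <= x <= b.
Proof. unfold Rabs; destruct Rcase_abs; lra. Qed.

Lemma cube_le x p : -p <= x <= p -> - (p*p*p) <= x^3 <= p*p*p.
Proof.
  intros [H1 H2]. assert (0 <= p) by lra.
  split; simpl.
  - assert (x*(x*(x*1)) + p*p*p = (x+p)*(x*x - x*p + p*p)) by ring.
    assert (0 <= x*x - x*p + p*p) by nra. nra.
  - assert (p*p*p - x*(x*(x*1)) = (p-x)*(x*x + x*p + p*p)) by ring.
    assert (0 <= x*x + x*p + p*p) by nra. nra.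
Qed.

Lemma xs_bounded p a : 0 < p -> p * p = 1/3 ->
  Rabs a <= 2*p/3 -> forall n, Rabs (xs a n) <= p.
Proof.
  intros Hp0 Hp Ha n; induction n; simpl.
  - rewrite Rabs_R0; lra.
  - apply abs_bt in IHn. apply abs_bt in Ha. apply cube_le in IHn.
    rewrite Hp in IHn. apply Rabs_le. simpl in *. lra.
Qed.

Lemma xs_grow p a : 0 < p -> p * p = 1/3 -> a > 2*p/3 ->
  forall n, 0 <= xs a n /\ INR n * (a - 2*p/3) <= xs a n.
Proof.
  intros Hp0 Hp Ha n; induction n.
  - simpl; lra.
  - cbn [xs]. destruct IHn as [H1 H2]. set (x := xs a n) in *.
    assert (E: (x-p)^2*(x+2*p) = x^3 - 3*(p*p)*x + 2*p*(p*p)) by ring.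
    rewrite Hp in E.
    assert (0 <= (x-p)^2*(x+2*p)).
    { apply Rmult_le_pos; [apply pow2_ge_0|lra]. }
    assert (0 <= x^3) by (apply pow_le; lra).
    rewrite S_INR. lra.
Qed.

Lemma xs_unbounded p a : 0 < p -> p * p = 1/3 -> Rabs a > 2*p/3 ->
  forall B, exists n, (1 <= n)%nat /\ Rabs (xs a n) > B.
Proof.
  intros Hp0 Hp Ha B.
  assert (Hgen: forall a, a > 2*p/3 -> exists n, (1 <= n)%nat /\ Rabs (xs a n) > B).
  { intros a' Ha'. destruct (INR_archimed (a' - 2*p/3) B) as [n Hn]; [lra|].
    exists (S n). split; [lia|].
    destruct (xs_grow p a' Hp0 Hp Ha' (S n)) as [H1 H2].
    rewrite S_INR in H2. rewrite Rabs_right by lra. nra. }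
  unfold Rabs in Ha; destruct Rcase_abs in Ha.
  - destruct (Hgen (-a)) as [n [Hn1 Hn2]]; [lra|]. exists n; split; auto.
    rewrite xs_opp, Rabs_Ropp in Hn2. auto.
  - apply Hgen; lra.
Qed.

Definition G (y1 y2 y3 y4 : R) : M3 :=
  fun k => match k with
           | (false,false,false) => (y1+y2+y3+y4)/4
           | (true,true,false) => (y1+y2-y3-y4)/4
           | (true,false,true) => (y1-y2+y3-y4)/4
           | (false,true,true) => -(y1-y2-y3+y4)/4
           | _ => 0
           end.

Lemma iter_G c1 c4 c6 n :
  Q3_iter (perplex_pt c1 c4 c6) n =
  G (xs (c1+c4+c6) n) (xs (c1+c4-c6) n) (xs (c1-c4+c6) n) (xs (c1-c4-c6) n).
Proof.
  induction n as [|n IH].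
  - apply functional_extensionality; intros [[[|][|]][|]]; unfold G; simpl; unfold M3_zero; field.
  - simpl Q3_iter. rewrite IH. simpl xs.
    set (y1 := xs (c1+c4+c6) n). set (y2 := xs (c1+c4-c6) n).
    set (y3 := xs (c1-c4+c6) n). set (y4 := xs (c1-c4-c6) n).
    apply functional_extensionality; intros [[[|][|]][|]];
    unfold Q3, M3_add, M3_mul, sum_idx, G, perplex_pt; simpl; field.
Qed.


Lemma coord_le_norm (X : M3) k : Rabs (X k) <= M3_norm X.
Proof.
  unfold M3_norm. rewrite <- sqrt_Rsqr_abs. apply sqrt_le_1_alt.
  unfold Rsqr, sum_idx; simpl.
  pose proof (pow2_ge_0 (X (false,false,false))).
  pose proof (pow2_ge_0 (X (true,false,false))).
  pose proof (pow2_ge_0 (X (false,true,false))).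
  pose proof (pow2_ge_0 (X (false,false,true))).
  pose proof (pow2_ge_0 (X (true,true,false))).
  pose proof (pow2_ge_0 (X (true,false,true))).
  pose proof (pow2_ge_0 (X (false,true,true))).
  pose proof (pow2_ge_0 (X (true,true,true))).
  destruct k as [[[|][|]][|]]; simpl in *; lra.
Qed.

Lemma sq_le1 z : -1 <= z <= 1 -> z ^ 2 <= 1.
Proof. intros; simpl; nra. Qed.

Lemma G_norm y1 y2 y3 y4 : -1 <= y1 <= 1 -> -1 <= y2 <= 1 -> -1 <= y3 <= 1 ->
  -1 <= y4 <= 1 -> M3_norm (G y1 y2 y3 y4) <= sqrt 8.
Proof.
  intros. unfold M3_norm. apply sqrt_le_1_alt. unfold sum_idx, G; simpl.
  assert (((y1+y2+y3+y4)/4)^2 <= 1) by (apply sq_le1; lra).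
  assert (((y1+y2-y3-y4)/4)^2 <= 1) by (apply sq_le1; lra).
  assert (((y1-y2+y3-y4)/4)^2 <= 1) by (apply sq_le1; lra).
  assert ((-(y1-y2-y3+y4)/4)^2 <= 1) by (apply sq_le1; lra).
  simpl in *. lra.
Qed.

Lemma G_y_bound y1 y2 y3 y4 B : M3_norm (G y1 y2 y3 y4) <= B ->
  Rabs y1 <= 4*B /\ Rabs y2 <= 4*B /\ Rabs y3 <= 4*B /\ Rabs y4 <= 4*B.
Proof.
  intros HB.
  pose proof (coord_le_norm (G y1 y2 y3 y4) (false,false,false)) as H0.
  pose proof (coord_le_norm (G y1 y2 y3 y4) (true,true,false)) as H1.
  pose proof (coord_le_norm (G y1 y2 y3 y4) (true,false,true)) as H2.
  pose proof (coord_le_norm (G y1 y2 y3 y4) (false,true,true)) as H3.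
  simpl in H0, H1, H2, H3.
  apply abs_bt in H0; apply abs_bt in H1; apply abs_bt in H2; apply abs_bt in H3.
  repeat split; apply Rabs_le; lra.
Qed.

Theorem mainTheorem18 : forall c1 c4 c6 : R,
  in_Perplexbric c1 c4 c6 <->
  Rabs c1 + Rabs c4 + Rabs c6 <= 2 / (3 * sqrt 3).
Proof.
  intros c1 c4 c6.
  set (p := / sqrt 3).
  assert (Hs : 0 < sqrt 3) by (apply sqrt_lt_R0; lra).
  assert (Hss : sqrt 3 * sqrt 3 = 3) by (apply sqrt_sqrt; lra).
  assert (Hp0 : 0 < p) by (unfold p; apply Rinv_0_lt_compat; auto).
  assert (Hp : p * p = 1/3).
  { unfold p. rewrite <- Rinv_mult, Hss. field. }
  assert (Hr : 2 / (3 * sqrt 3) = 2*p/3) by (unfold p; field; lra).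
  assert (Hp1 : p <= 1) by nra.
  rewrite Hr. unfold in_Perplexbric, bounded_orbit. split.
  - intros [B HB].
    assert (Hall : forall a, (forall n, (1 <= n)%nat -> Rabs (xs a n) <= 4*B) ->
                   Rabs a <= 2*p/3).
    { intros a Ha. destruct (Rle_or_lt (Rabs a) (2*p/3)) as [|Hlt]; auto.
      destruct (xs_unbounded p a Hp0 Hp Hlt (4*B)) as [n [Hn1 Hn2]].
      specialize (Ha n Hn1). lra. }
    assert (H1 : Rabs (c1+c4+c6) <= 2*p/3).
    { apply Hall; intros n Hn. specialize (HB n Hn). rewrite iter_G in HB.
      apply G_y_bound in HB; tauto. }
    assert (H2 : Rabs (c1+c4-c6) <= 2*p/3).
    { apply Hall; intros n Hn. specialize (HB n Hn). rewrite iter_G in HB.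
      apply G_y_bound in HB; tauto. }
    assert (H3 : Rabs (c1-c4+c6) <= 2*p/3).
    { apply Hall; intros n Hn. specialize (HB n Hn). rewrite iter_G in HB.
      apply G_y_bound in HB; tauto. }
    assert (H4 : Rabs (c1-c4-c6) <= 2*p/3).
    { apply Hall; intros n Hn. specialize (HB n Hn). rewrite iter_G in HB.
      apply G_y_bound in HB; tauto. }
    revert H1 H2 H3 H4. clear -Hp0.
    unfold Rabs; repeat destruct Rcase_abs; lra.
  - intros Hsum. exists (sqrt 8). intros n _. rewrite iter_G.
    assert (Hb : forall a, Rabs a <= 2*p/3 -> -1 <= xs a n <= 1).
    { intros a Ha. pose proof (xs_bounded p a Hp0 Hp Ha n) as Hx.
      apply abs_bt in Hx; lra. }
    assert (Ht : forall a b c, Rabs (a+b+c) <= Rabs a + Rabs b + Rabs c).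
    { intros. unfold Rabs; repeat destruct Rcase_abs; lra. }
    apply G_norm; apply Hb.
    + pose proof (Ht c1 c4 c6); lra.
    + pose proof (Ht c1 c4 (-c6)); rewrite Rabs_Ropp in *; unfold Rminus; lra.
    + pose proof (Ht c1 (-c4) c6); rewrite Rabs_Ropp in *; unfold Rminus; lra.
    + pose proof (Ht c1 (-c4) (-c6)); rewrite !Rabs_Ropp in *; unfold Rminus; lra.
Qed.
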